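(* Let $C$ be a finite group and $G$ a group whose commutator subgroup $[G,G]$ is $C$ and whose abelianization $G/C$ is free abelian of finite rank. If $N\lhd G$ is a normal subgroup with $N\cap C$ trivial, then $N$ is contained in the center of $G$. *)

(* Defs.v *)
(* Possibly infinite groups are not available in MathComp (fingroup is finite
   only), so an abstract group is given by an honest record of axioms. *)
From Stdlib Require List.
From mathcomp Require Import all_boot all_algebra.
Set Implicit Arguments. Unset Strict Implicit. Unset Printing Implicit Defensive.
Import GRing.Theory.
Local Open Scope ring_scope.

Record group := Group {
  gcarrier :> Type;
  gmul : gcarrier -> gcarrier -> gcarrier;
  gone : gcarrier;
  ginv : gcarrier -> gcarrier;
  gmulA : forall x y z, gmul x (gmul y z) = gmul (gmul x y) z;
  gmul1 : forall x, gmul gone x = x;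
  gmulV : forall x, gmul (ginv x) x = gone
}.

Section GroupDefs.
Variable G : group.
Local Notation "x * y" := (gmul x y).
Local Notation "1" := (gone G).
Local Notation "x ^-1" := (ginv x).

Definition gcomm (x y : G) : G := x^-1 * y^-1 * x * y.

Inductive generated (S : G -> Prop) : G -> Prop :=
| gen_base x : S x -> generated S x
| gen_one : generated S 1
| gen_mul x y : generated S x -> generated S y -> generated S (x * y)
| gen_inv x : generated S x -> generated S (x^-1).

Definition derived_subgroup : G -> Prop :=
  generated (fun z => exists x y, z = gcomm x y).

Definition is_subgroup (H : G -> Prop) : Prop :=
  H 1 /\ (forall x y, H x -> H y -> H (x * y)) /\ (forall x, H x -> H (x^-1)).

Definition is_normal_subgroup (N : G -> Prop) : Prop :=
  is_subgroup N /\ (forall g x, N x -> N (g^-1 * x * g)).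

Definition finite_subset (H : G -> Prop) : Prop :=
  exists s : seq G, forall x, H x -> List.In x s.

Definition center (x : G) : Prop := forall g : G, g * x = x * g.

(* G / C is free abelian of finite rank: for some n there is a surjective
   group homomorphism G -> Z^n (= 'rV[int]_n) whose kernel is exactly C,
   i.e. (first isomorphism theorem) G / C is isomorphic to Z^n. *)
Definition quotient_free_abelian_finite_rank (C : G -> Prop) : Prop :=
  exists (n : nat) (phi : G -> 'rV[int]_n),
    (forall x y, phi (x * y) = phi x + phi y) /\
    (forall v, exists x, phi x = v) /\
    (forall x, phi x = 0 <-> C x).

End GroupDefs.

(* Main.v *)
Require Import Defs.
From mathcomp Require Import all_boot all_algebra.

Lemma gmulVr (G : group) (x : G) : gmul x (ginv x) = gone G.
Proof.
  rewrite -[gmul x (ginv x)]gmul1.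
  rewrite -[in gmul (gone G) _](gmulV (ginv x)).
  rewrite -gmulA [gmul (ginv x) (gmul x (ginv x))]gmulA gmulV gmul1.
  exact: gmulV.
Qed.

Lemma gmulLK (G : group) (x y : G) : gmul x (gmul (ginv x) y) = y.
Proof. by rewrite gmulA gmulVr gmul1. Qed.

Lemma gmulr1 (G : group) (x : G) : gmul x (gone G) = x.
Proof. by rewrite -(gmulV x) gmulA gmulVr gmul1. Qed.

Theorem proposition11 (G : group) (C : G -> Prop) :
  is_subgroup C ->
  finite_subset C ->
  (forall x, C x <-> derived_subgroup x) ->
  quotient_free_abelian_finite_rank C ->
  forall N : G -> Prop,
    is_normal_subgroup N ->
    (forall x, N x -> C x -> x = gone G) ->
    forall x, N x -> center x.
Proof.
  move=> _ _ hC _ N [[_ [NM NI]] NN] hNC x Nx g.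
  have hc : gcomm x g = gone G.
    apply: hNC.
      rewrite /gcomm -!gmulA [gmul (ginv g) _]gmulA.
      apply: NM; first exact: NI.
      exact: NN.
    apply/hC; apply: gen_base; by exists x, g.
  move: hc; rewrite /gcomm -!gmulA => hc.
  have e : gmul (ginv g) (gmul x g) = x.
    by rewrite -[LHS](gmulLK _ x) hc gmulr1.
  by rewrite -{1}e gmulLK.
Qed.
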